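(* Let $\ell,\beta,m,s>0$ and $d_{11},d_{22},d_{21},\xi\ge 0$, and consider the Holling–Tanner system with spatial memory and predator-taxis \[ \begin{aligned} u_t&=d_{11}u_{xx}+\xi\,(u\,v_x)_x+u(1-\beta u)-\frac{muv}{1+u},\\ v_t&=d_{22}v_{xx}-d_{21}\,\big(v(x,t)\,u_x(x,t-\tau)\big)_x+sv\Big(1-\frac{v}{u}\Big), \end{aligned}\qquad x\in(0,\ell\pi),\ t>0, \] with homogeneous Neumann boundary conditions $u_x=v_x=0$ at $x=0,\ell\pi$ and memory delay $\tau\ge0$. Let $E_*=(u_*,v_* )$, the quantities $a_{ij}$, $T_n$, $J_n$, $K_n$, $P_n$, $Q_n$, $n_1,n_2$, $\omega_n$, $\tau_{n,j}$ be as defined in the context. Suppose that $d_{11}d_{22}-d_{21}\xi u_*v_*>0$, that condition $a_{11}<0$ holds, and that \[ \operatorname{Det}(A)>0,\quad \widetilde A_1>0,\quad \widetilde A_1^2-4\widetilde A_2\operatorname{Det}(A)>0 . \] Let $n\in\mathbb{N}$ with $n_1<n<n_2$ and $j\in\mathbb{N}_0$, and let $\lambda(\tau)$ be the root of the characteristic equation \[ \lambda^2-T_n\lambda+\widetilde J_n(\tau)=0,\qquad \widetilde J_n(\tau)=\big(d_{11}d_{22}+d_{21}\xi u_*v_*e^{-\lambda\tau}\big)\frac{n^4}{\ell^4}-\big(d_{11}a_{22}+d_{22}a_{11}-a_{21}\xi u_*+d_{21}v_*a_{12}e^{-\lambda\tau}\big)\frac{n^2}{\ell^2}+\operatorname{Det}(A),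 \] depending smoothly on $\tau$ near $\tau_{n,j}$ with $\lambda(\tau_{n,j})=i\omega_n$. Then \[ \left.\frac{d\,\operatorname{Re}\lambda(\tau)}{d\tau}\right|_{\tau=\tau_{n,j}}>0 . \]
   Context: Definitions: $u_*=v_*=\frac{1}{2\beta}\big(\sqrt{R^2+4\beta}-R\big)$ with $R=\beta+m-1$ (the positive constant steady state). $a_{11}=1-2\beta u_*-\frac{mu_*}{(1+u_* )^2}$, $a_{12}=-\frac{mu_*}{1+u_*}$, $a_{21}=s$, $a_{22}=-s$; $A=(a_{ij})$, $\operatorname{Det}(A)=a_{11}a_{22}-a_{12}a_{21}$. For $n\in\mathbb{N}_0$: $T_n=a_{11}+a_{22}-(d_{11}+d_{22})\frac{n^2}{\ell^2}$; $J_n=d_{11}d_{22}\frac{n^4}{\ell^4}-(d_{11}a_{22}+d_{22}a_{11}-a_{21}\xi u_* )\frac{n^2}{\ell^2}+\operatorname{Det}(A)$; $K_n=d_{21}\xi u_*v_*\frac{n^4}{\ell^4}-d_{21}v_*a_{12}\frac{n^2}{\ell^2}$; $P_n=T_n^2-2J_n$; $Q_n=(J_n+K_n)(J_n-K_n)$. Further $\widetilde A_1=d_{11}a_{22}+d_{22}a_{11}-a_{21}\xi u_*-d_{21}v_*a_{12}$, $\widetilde A_2=d_{11}d_{22}-d_{21}\xi u_*v_*$, $\widetilde A_3=\widetilde A_1^2-4\widetilde A_2\operatorname{Det}(A)$, $\widetilde x_{1,2}=\frac{\widetilde A_1\mp\sqrt{\widetilde A_3}}{2\widetilde A_2}$,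 $n_1=\ell\sqrt{\widetilde x_1}$, $n_2=\ell\sqrt{\widetilde x_2}$. For $n_1<n<n_2$: $\omega_n=\sqrt{\frac{-P_n+\sqrt{P_n^2-4Q_n}}{2}}$ and $\tau_{n,j}=\frac{1}{\omega_n}\Big(\arccos\frac{\omega_n^2-J_n}{K_n}+2j\pi\Big)$, $j\in\mathbb{N}_0$. *)

(* Defs.v *)
From Stdlib Require Import Reals.
From Coquelicot Require Import Coquelicot.
Open Scope R_scope.

Definition cexp (z : C) : C :=
  (exp (Re z) * cos (Im z), exp (Re z) * sin (Im z)).

Section HT.
Variables (ell beta m s d11 d22 d21 xi : R).

Definition Rr : R := beta + m - 1.
Definition ustar : R := (sqrt (Rr ^ 2 + 4 * beta) - Rr) / (2 * beta).
Definition vstar : R := ustar.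

Definition a11 : R := 1 - 2 * beta * ustar - m * ustar / (1 + ustar) ^ 2.
Definition a12 : R := - (m * ustar / (1 + ustar)).
Definition a21 : R := s.
Definition a22 : R := - s.
Definition DetA : R := a11 * a22 - a12 * a21.

Definition T_ (n : nat) : R := a11 + a22 - (d11 + d22) * (INR n ^ 2 / ell ^ 2).
Definition J_ (n : nat) : R :=
  d11 * d22 * (INR n ^ 4 / ell ^ 4)
  - (d11 * a22 + d22 * a11 - a21 * xi * ustar) * (INR n ^ 2 / ell ^ 2) + DetA.
Definition K_ (n : nat) : R :=
  d21 * xi * ustar * vstar * (INR n ^ 4 / ell ^ 4)
  - d21 * vstar * a12 * (INR n ^ 2 / ell ^ 2).
Definition P_ (n : nat) : R := T_ n ^ 2 - 2 * J_ n.
Definition Q_ (n : nat) : R := (J_ n + K_ n) * (J_ n - K_ n).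

Definition At1 : R := d11 * a22 + d22 * a11 - a21 * xi * ustar - d21 * vstar * a12.
Definition At2 : R := d11 * d22 - d21 * xi * ustar * vstar.
Definition At3 : R := At1 ^ 2 - 4 * At2 * DetA.
Definition xt1 : R := (At1 - sqrt At3) / (2 * At2).
Definition xt2 : R := (At1 + sqrt At3) / (2 * At2).
Definition n1 : R := ell * sqrt xt1.
Definition n2 : R := ell * sqrt xt2.

Definition omega_ (n : nat) : R :=
  sqrt ((- P_ n + sqrt (P_ n ^ 2 - 4 * Q_ n)) / 2).
Definition tau_ (n j : nat) : R :=
  / omega_ n * (acos ((omega_ n ^ 2 - J_ n) / K_ n) + 2 * INR j * PI).

Definition Jt_ (n : nat) (lam : C) (tau : R) : C :=
  (RtoC (d11 * d22) + RtoC (d21 * xi * ustar * vstar) * cexp (- lam * RtoC tau))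
    * RtoC (INR n ^ 4 / ell ^ 4)
  - (RtoC (d11 * a22 + d22 * a11 - a21 * xi * ustar)
     + RtoC (d21 * vstar * a12) * cexp (- lam * RtoC tau)) * RtoC (INR n ^ 2 / ell ^ 2)
  + RtoC DetA.

Definition charF (n : nat) (lam : C) (tau : R) : C :=
  lam * lam - RtoC (T_ n) * lam + Jt_ n lam tau.
End HT.

(* Main.v *)
Require Import Defs.
From Stdlib Require Import Reals Lra Psatz.
From Coquelicot Require Import Coquelicot.
Open Scope R_scope.



Lemma reF ell beta m s d11 d22 d21 xi n lam t :
  Re (charF ell beta m s d11 d22 d21 xi n lam t) =
  Re lam * Re lam - Im lam * Im lam - T_ ell beta m s d11 d22 n * Re lam
  + J_ ell beta m s d11 d22 xi n + K_ ell beta m d21 xi n * exp (-(Re lam * t)) * cos (-(Im lam * t)).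
Proof.
  unfold charF, Jt_, cexp.
  replace (Re (- lam * RtoC t)) with (-(Re lam * t)) by (destruct lam; simpl; ring).
  replace (Im (- lam * RtoC t)) with (-(Im lam * t)) by (destruct lam; simpl; ring).
  destruct lam as [x y]; unfold T_, J_, K_; simpl. ring.
Qed.

Lemma imF ell beta m s d11 d22 d21 xi n lam t :
  Im (charF ell beta m s d11 d22 d21 xi n lam t) =
  2 * Re lam * Im lam - T_ ell beta m s d11 d22 n * Im lam
  + K_ ell beta m d21 xi n * exp (-(Re lam * t)) * sin (-(Im lam * t)).
Proof.
  unfold charF, Jt_, cexp.
  replace (Re (- lam * RtoC t)) with (-(Re lam * t)) by (destruct lam; simpl; ring).
  replace (Im (- lam * RtoC t)) with (-(Im lam * t)) by (destruct lam; simpl; ring).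
  destruct lam as [x y]; unfold T_, J_, K_; simpl. ring.
Qed.

Lemma deriv_core (T J K w tau p q c s0 : R) :
  - w * w + J + K * c = 0 ->
  - T * w - K * s0 = 0 ->
  -2 * w * q - T * p - K * tau * p * c - K * s0 * (q * tau + w) = 0 ->
  2 * w * p - T * q + K * tau * p * s0 - K * c * (q * tau + w) = 0 ->
  p * ((-T - tau * (w*w - J))^2 + (2*w - T*w*tau)^2) = w * w * (T*T + 2*(w*w) - 2*J).
Proof.
  intros G1 G2 E1 E2.
  assert (HC : K * c = w*w - J) by lra.
  assert (HS : K * s0 = - T * w) by lra.
  assert (E1' : (-T - tau * (w*w - J)) * p - (2*w - T*w*tau) * q + T*(w*w) = 0).
  { rewrite <- HC, <- E1. replace (K * s0 * (q * tau + w)) with ((K*s0) * (q*tau+w)) by ring.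
    rewrite HS. ring. }
  assert (E2' : (2*w - T*w*tau) * p + (-T - tau * (w*w - J)) * q - (w*w-J)*w = 0).
  { rewrite <- HC, <- E2. replace (K * tau * p * s0) with ((K*s0) * (tau*p)) by ring.
    rewrite HS. ring. }
  assert (Hid : p * ((-T - tau * (w*w - J))^2 + (2*w - T*w*tau)^2) - w * w * (T*T + 2*(w*w) - 2*J)
     = (-T - tau * (w*w - J)) * ((-T - tau * (w*w - J)) * p - (2*w - T*w*tau) * q + T*(w*w))
       + (2*w - T*w*tau) * ((2*w - T*w*tau) * p + (-T - tau * (w*w - J)) * q - (w*w-J)*w)) by ring.
  rewrite E1', E2' in Hid. lra.
Qed.


Lemma ustar_pos beta m : 0 < beta -> 0 < ustar beta m.
Proof.
  intros Hb. unfold ustar.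
  set (r := Rr beta m).
  assert (H1 : r < sqrt (r^2 + 4*beta)).
  { destruct (Rle_or_lt r 0). { assert (0 < sqrt (r^2+4*beta)) by (apply sqrt_lt_R0; nra). lra. }
    rewrite <- (sqrt_pow2 r) at 1 by lra. apply sqrt_lt_1; nra. }
  apply Rdiv_lt_0_compat; lra.
Qed.

Lemma params ell beta m s d11 d22 d21 xi n
  (Hell : 0 < ell) (Hbeta : 0 < beta) (Hm : 0 < m) (Hs : 0 < s)
  (Hd11 : 0 <= d11) (Hd22 : 0 <= d22) (Hd21 : 0 <= d21) (Hxi : 0 <= xi)
  (HA2 : d11 * d22 - d21 * xi * ustar beta m * vstar beta m > 0)
  (Ha11 : a11 beta m < 0)
  (HDet : DetA beta m s > 0)
  (HA1 : At1 beta m s d11 d22 d21 xi > 0)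
  (HA3 : At1 beta m s d11 d22 d21 xi ^ 2
         - 4 * At2 beta m d11 d22 d21 xi * DetA beta m s > 0)
  (Hn1 : n1 ell beta m s d11 d22 d21 xi < INR n)
  (Hn2 : INR n < n2 ell beta m s d11 d22 d21 xi) :
  let w := omega_ ell beta m s d11 d22 d21 xi n in
  let T := T_ ell beta m s d11 d22 n in
  let J := J_ ell beta m s d11 d22 xi n in
  T < 0 /\ 0 < w /\ 0 < T*T + 2*(w*w) - 2*J.
Proof.
  intros w T J.
  pose proof (ustar_pos beta m Hbeta) as Hu.
  set (u := ustar beta m) in *.
  assert (Hv : vstar beta m = u) by reflexivity.
  set (x := INR n ^ 2 / ell ^ 2).
  assert (Hx0 : 0 <= x) by (unfold x; apply Rmult_le_pos; [apply pow2_ge_0| left; apply Rinv_0_lt_compat; apply pow_lt; lra]).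
  assert (HT : T < 0).
  { unfold T, T_, a22. fold x. assert (0 <= (d11 + d22) * x) by (apply Rmult_le_pos; lra). lra. }
  set (A1 := At1 beta m s d11 d22 d21 xi) in *.
  set (A2 := At2 beta m d11 d22 d21 xi) in *.
  set (Dt := DetA beta m s) in *.
  assert (HA2' : 0 < A2) by (change (0 < d11 * d22 - d21 * xi * u * u); exact HA2).
  set (r := sqrt (At3 beta m s d11 d22 d21 xi)).
  assert (Hr0 : 0 <= r) by apply sqrt_pos.
  assert (Hrr : r * r = A1^2 - 4*A2*Dt) by (unfold r; rewrite sqrt_sqrt; unfold At3; fold A1 A2 Dt; [ring|lra]).
  assert (HrA : r < A1) by nra.
  assert (Hxt1 : 0 < xt1 beta m s d11 d22 d21 xi).
  { unfold xt1; fold A1 A2 r. apply Rdiv_lt_0_compat; lra. }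
  assert (Hxt2 : 0 < xt2 beta m s d11 d22 d21 xi).
  { unfold xt2; fold A1 A2 r. apply Rdiv_lt_0_compat; lra. }
  assert (Hlo : xt1 beta m s d11 d22 d21 xi < x).
  { unfold n1 in Hn1. pose proof (sqrt_sqrt _ (Rlt_le _ _ Hxt1)).
    pose proof (sqrt_pos (xt1 beta m s d11 d22 d21 xi)).
    assert (sqrt (xt1 beta m s d11 d22 d21 xi) < INR n / ell).
    { apply (Rmult_lt_reg_l ell); [lra|]. field_simplify; lra. }
    unfold x. replace (INR n ^ 2 / ell ^ 2) with ((INR n / ell)^2) by (field; lra). nra. }
  assert (Hhi : x < xt2 beta m s d11 d22 d21 xi).
  { unfold n2 in Hn2. pose proof (sqrt_sqrt _ (Rlt_le _ _ Hxt2)).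
    assert (0 <= INR n / ell) by (apply Rdiv_le_0_compat; [apply pos_INR|lra]).
    assert (INR n / ell < sqrt (xt2 beta m s d11 d22 d21 xi)).
    { apply (Rmult_lt_reg_l ell); [lra|]. field_simplify; lra. }
    unfold x. replace (INR n ^ 2 / ell ^ 2) with ((INR n / ell)^2) by (field; lra). nra. }
  set (K := K_ ell beta m d21 xi n).
  assert (Hx4 : INR n ^ 4 / ell ^ 4 = x * x) by (unfold x; field; lra).
  assert (HJmK : J - K = A2 * (x - xt1 beta m s d11 d22 d21 xi) * (x - xt2 beta m s d11 d22 d21 xi)).
  { transitivity (A2 * x * x - A1 * x + Dt).
    { unfold J, K, J_, K_. rewrite Hx4. fold x. 
      unfold A1, A2, At1, At2. rewrite Hv. fold u. fold Dt. ring. }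
    unfold xt1, xt2. fold A1 A2 r. field_simplify; [|lra].
    replace (r^2) with (r*r) by ring. rewrite Hrr. field. lra. }
  assert (HJmK' : J - K < 0).
  { rewrite HJmK. assert (0 < x - xt1 beta m s d11 d22 d21 xi) by lra.
    assert (x - xt2 beta m s d11 d22 d21 xi < 0) by lra.
    assert (0 < A2 * (x - xt1 beta m s d11 d22 d21 xi)) by (apply Rmult_lt_0_compat; lra). nra. }
  assert (HJpK : 0 < J + K).
  { assert (E : J + K = d11*d22*(x*x) + d21*xi*(u*u)*(x*x) + d11*s*x - d22*a11 beta m*x + s*xi*u*x
       + d21*u*(m*u/(1+u))*x + Dt).
    { unfold J, K, J_, K_. rewrite Hx4. fold x. unfold a22, a21, a12. rewrite Hv. fold u Dt.
      field. lra. }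
    rewrite E.
    assert (0 <= d11*d22*(x*x)) by (apply Rmult_le_pos; [apply Rmult_le_pos|nra]; lra).
    assert (0 <= d21*xi*(u*u)*(x*x)) by (apply Rmult_le_pos; [apply Rmult_le_pos; [apply Rmult_le_pos|nra]|nra]; lra).
    assert (0 <= d11*s*x) by (apply Rmult_le_pos; [apply Rmult_le_pos|]; lra).
    assert (0 <= - d22*a11 beta m*x) by (apply Rmult_le_pos; [nra|lra]).
    assert (0 <= s*xi*u*x) by (apply Rmult_le_pos; [apply Rmult_le_pos; [apply Rmult_le_pos|]|]; lra).
    assert (0 <= m*u/(1+u)) by (apply Rdiv_le_0_compat; nra).
    assert (0 <= d21*u*(m*u/(1+u))*x) by (apply Rmult_le_pos; [apply Rmult_le_pos; [apply Rmult_le_pos|]|]; lra).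
    lra. }
  assert (HQ : Q_ ell beta m s d11 d22 d21 xi n < 0).
  { unfold Q_. fold J K. nra. }
  set (Q := Q_ ell beta m s d11 d22 d21 xi n) in *.
  set (P := P_ ell beta m s d11 d22 xi n).
  assert (HP : P = T*T - 2*J) by (unfold P, P_; fold T J; ring).
  assert (HD : 0 <= P^2 - 4*Q) by nra.
  set (sD := sqrt (P^2 - 4*Q)).
  assert (HsD0 : 0 <= sD) by apply sqrt_pos.
  assert (HsD2 : sD * sD = P^2 - 4*Q) by (apply sqrt_sqrt; exact HD).
  assert (HsDP : P < sD) by nra.
  assert (HsDP' : -P < sD) by nra.
  assert (Hw2 : 0 < (- P + sD) / 2) by lra.
  assert (Hww : w * w = (- P + sD) / 2) by (unfold w, omega_; fold P Q sD; apply sqrt_sqrt; lra).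
  assert (Hw : 0 < w) by (unfold w, omega_; fold P Q sD; apply sqrt_lt_R0; lra).
  split; [exact HT|split; [exact Hw|]].
  rewrite Hww. nra.
Qed.


Lemma derivs (X Y : R -> R) T J K t0 w delta : 0 < delta ->
  (forall t, Rabs (t - t0) < delta ->
     X t * X t - Y t * Y t - T * X t + J + K * exp (-(X t * t)) * cos (-(Y t * t)) = 0 /\
     2 * X t * Y t - T * Y t + K * exp (-(X t * t)) * sin (-(Y t * t)) = 0) ->
  ex_derive X t0 -> ex_derive Y t0 -> X t0 = 0 -> Y t0 = w ->
  let p := Derive X t0 in let q := Derive Y t0 in
  let c := cos (w * t0) in let s0 := sin (w * t0) in
  - w * w + J + K * c = 0 /\ - T * w - K * s0 = 0 /\
  -2 * w * q - T * p - K * t0 * p * c - K * s0 * (q * t0 + w) = 0 /\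
  2 * w * p - T * q + K * t0 * p * s0 - K * c * (q * t0 + w) = 0.
Proof.
  intros Hd Hloc HdX HdY HX HY p q c s0.
  assert (Hloc0 := Hloc t0 ltac:(rewrite Rminus_diag, Rabs_R0; lra)).
  rewrite HX, HY in Hloc0.
  replace (-(0 * t0)) with 0 in Hloc0 by ring. rewrite exp_0, cos_neg, sin_neg in Hloc0.
  fold c s0 in Hloc0. destruct Hloc0 as [G1 G2].
  assert (Hl : forall (F : R -> R), (forall t, Rabs (t - t0) < delta -> F t = 0) ->
     is_derive F t0 0).
  { intros F HF. apply (is_derive_ext_loc (fun _ => 0)).
    - exists (mkposreal delta Hd). intros t Ht. symmetry. apply HF. exact Ht.
    - auto_derive; [exact I|ring]. }
  assert (D1 : is_derive (fun t => X t * X t - Y t * Y t - T * X t + J + K * exp (-(X t * t)) * cos (-(Y t * t))) t0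
                 (-2 * w * q - T * p - K * t0 * p * c - K * s0 * (q * t0 + w))).
  { auto_derive. repeat split; assumption.
    rewrite HX, HY. fold p q. replace (-(0 * t0)) with 0 by ring. rewrite exp_0, cos_neg, sin_neg. fold c s0. match goal with |- ?a = ?b => change (@eq R a b) end. change (Derive (fun x => X x) t0) with p. change (Derive (fun x => Y x) t0) with q. ring. }
  assert (D2 : is_derive (fun t => 2 * X t * Y t - T * Y t + K * exp (-(X t * t)) * sin (-(Y t * t))) t0
                 (2 * w * p - T * q + K * t0 * p * s0 - K * c * (q * t0 + w))).
  { auto_derive. repeat split; assumption.
    rewrite HX, HY. fold p q. replace (-(0 * t0)) with 0 by ring. rewrite exp_0, cos_neg, sin_neg. fold c s0. match goal with |- ?a = ?b => change (@eq R a b) end. change (Derive (fun x => X x) t0) with p. change (Derive (fun x => Y x) t0) with q. ring. }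
  assert (Z1 : is_derive (fun t => X t * X t - Y t * Y t - T * X t + J + K * exp (-(X t * t)) * cos (-(Y t * t))) t0 0)
    by (apply Hl; intros t Ht; apply (proj1 (Hloc t Ht))).
  assert (Z2 : is_derive (fun t => 2 * X t * Y t - T * Y t + K * exp (-(X t * t)) * sin (-(Y t * t))) t0 0)
    by (apply Hl; intros t Ht; apply (proj2 (Hloc t Ht))).
  pose proof (is_derive_unique _ _ _ D1) as U1. pose proof (is_derive_unique _ _ _ Z1) as U2.
  pose proof (is_derive_unique _ _ _ D2) as U3. pose proof (is_derive_unique _ _ _ Z2) as U4.
  split; [lra|split; [lra|split]]; congruence.
Qed.

Theorem lemma4p3
  (ell beta m s d11 d22 d21 xi : R)
  (Hell : 0 < ell) (Hbeta : 0 < beta) (Hm : 0 < m) (Hs : 0 < s)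
  (Hd11 : 0 <= d11) (Hd22 : 0 <= d22) (Hd21 : 0 <= d21) (Hxi : 0 <= xi)
  (HA2 : d11 * d22 - d21 * xi * ustar beta m * vstar beta m > 0)
  (Ha11 : a11 beta m < 0)
  (HDet : DetA beta m s > 0)
  (HA1 : At1 beta m s d11 d22 d21 xi > 0)
  (HA3 : At1 beta m s d11 d22 d21 xi ^ 2
         - 4 * At2 beta m d11 d22 d21 xi * DetA beta m s > 0)
  (n j : nat)
  (Hn1 : n1 ell beta m s d11 d22 d21 xi < INR n)
  (Hn2 : INR n < n2 ell beta m s d11 d22 d21 xi)
  (lam : R -> C) (delta : R) (Hdelta : 0 < delta) :
  let tau0 := tau_ ell beta m s d11 d22 d21 xi n j in
  (forall tau, Rabs (tau - tau0) < delta ->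
     charF ell beta m s d11 d22 d21 xi n (lam tau) tau = 0%C
     /\ ex_derive (fun t => Re (lam t)) tau
     /\ ex_derive (fun t => Im (lam t)) tau) ->
  lam tau0 = (0, omega_ ell beta m s d11 d22 d21 xi n) ->
  Derive (fun t => Re (lam t)) tau0 > 0.
Proof.
  intros tau0 Hloc Hl0.
  pose proof (params ell beta m s d11 d22 d21 xi n Hell Hbeta Hm Hs Hd11 Hd22 Hd21 Hxi
     HA2 Ha11 HDet HA1 HA3 Hn1 Hn2) as HP. cbv zeta in HP.
  destruct HP as [HT [Hw Hpos]].
  set (T := T_ ell beta m s d11 d22 n) in *.
  set (J := J_ ell beta m s d11 d22 xi n) in *.
  set (K := K_ ell beta m d21 xi n) in *.
  set (w := omega_ ell beta m s d11 d22 d21 xi n) in *.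
  assert (H0 : Rabs (tau0 - tau0) < delta) by (rewrite Rminus_diag, Rabs_R0; lra).
  destruct (Hloc tau0 H0) as [_ [HdX HdY]].
  pose (X := fun t => Re (lam t)). pose (Y := fun t => Im (lam t)).
  assert (HX : X tau0 = 0) by (unfold X; rewrite Hl0; reflexivity).
  assert (HY : Y tau0 = w) by (unfold Y; rewrite Hl0; reflexivity).
  assert (HL : forall t, Rabs (t - tau0) < delta ->
     X t * X t - Y t * Y t - T * X t + J + K * exp (-(X t * t)) * cos (-(Y t * t)) = 0 /\
     2 * X t * Y t - T * Y t + K * exp (-(X t * t)) * sin (-(Y t * t)) = 0).
  { intros t Ht. destruct (Hloc t Ht) as [Hc _]. unfold X, Y.
    pose proof (reF ell beta m s d11 d22 d21 xi n (lam t) t) as E1.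
    pose proof (imF ell beta m s d11 d22 d21 xi n (lam t) t) as E2.
    rewrite Hc in E1, E2. split; symmetry; [exact E1|exact E2]. }
  pose proof (derivs X Y T J K tau0 w delta Hdelta HL HdX HdY HX HY) as D. cbv zeta in D.
  destruct D as [G1 [G2 [E1 E2]]].
  pose proof (deriv_core _ _ _ _ _ _ _ _ _ G1 G2 E1 E2) as Hid.
  change (Derive X tau0) with (Derive (fun t => Re (lam t)) tau0) in Hid.
  revert Hid. generalize (Derive (fun t => Re (lam t)) tau0). intros p Hid.
  assert (HS : 0 <= (-T - tau0 * (w*w - J))^2 + (2*w - T*w*tau0)^2)
    by (apply Rplus_le_le_0_compat; apply pow2_ge_0).
  assert (0 < w * w * (T * T + 2 * (w * w) - 2 * J)) by (apply Rmult_lt_0_compat; nra).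
  destruct (Rle_or_lt p 0) as [Hp|Hp]; [|lra].
  assert (p * ((-T - tau0 * (w*w - J))^2 + (2*w - T*w*tau0)^2) <= 0).
  { apply Rmult_le_0_r; lra. }
  lra.
Qed.
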